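(* Let $\alpha_f>0$ and $\mathcal{R}_f>0$ be arbitrary constants, and define functions on $[0,\infty)$ by $$\psi(r) := e^{-\alpha_f \min\{r^2,\mathcal{R}_f^2\}},\qquad \Psi(r):=\int_0^r\psi(s)\,ds,\qquad g(r):=1-\frac12\,\frac{\int_0^{\min\{r,\mathcal{R}_f\}}\frac{\Psi(s)}{\psi(s)}\,ds}{\int_0^{\mathcal{R}_f}\frac{\Psi(s)}{\psi(s)}\,ds},\qquad f(r):=\int_0^r\psi(s)g(s)\,ds.$$ Then: (F1) $f(0)=0$ and $f'(0)=1$. (F2) For all $r\ge 0$, $\frac12 e^{-\alpha_f\mathcal{R}_f^2}\le \frac12\psi(r)\le f'(r)\le 1$. (F3) For all $r\ge0$, $\frac12 e^{-\alpha_f\mathcal{R}_f^2}\, r\le \frac12\Psi(r)\le f(r)\le \Psi(r)\le r$. (F4) For all $0\le r\le \mathcal{R}_f$, $f''(r)+\alpha_f\, r f'(r)\le -\frac{e^{-\alpha_f\mathcal{R}_f^2}}{\mathcal{R}_f^2}\, f(r)$. (F5) For all $r\ge0$, $f''(r)\le 0$, and $f''(r)=0$ when $r>\mathcal{R}_f$. (F6) If $\alpha_f\mathcal{R}_f^2\ge \ln 2$, then for any $0<c<1$ and $r\ge 0$, $f(r)\le e^{-\frac{c\, e^{-\alpha_f\mathcal{R}_f^2}}{4}}\, f((1+c)r)$. *)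

(* Defs.v *)
From Stdlib Require Import Reals Lra.
From Coquelicot Require Import Coquelicot.
Open Scope R_scope.

Definition psi (alpha Rf : R) (r : R) : R := exp (- alpha * Rmin (r ^ 2) (Rf ^ 2)).

Definition Psi (alpha Rf : R) (r : R) : R := RInt (psi alpha Rf) 0 r.

Definition gfun (alpha Rf : R) (r : R) : R :=
  1 - / 2 * (RInt (fun s => Psi alpha Rf s / psi alpha Rf s) 0 (Rmin r Rf)
             / RInt (fun s => Psi alpha Rf s / psi alpha Rf s) 0 Rf).

Definition ffun (alpha Rf : R) (r : R) : R :=
  RInt (fun s => psi alpha Rf s * gfun alpha Rf s) 0 r.

(* For an interior point of D this is the usual two-sided derivative; at an
   endpoint of an interval D it is the corresponding one-sided derivative. *)
Definition has_deriv_in (D : R -> Prop) (F : R -> R) (x l : R) : Prop :=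
  filterlim (fun y => (F y - F x) / (y - x))
    (within (fun y => D y /\ y <> x) (locally x)) (locally l).

Definition nonneg_dom (r : R) : Prop := 0 <= r.

(* Main.v *)
Require Import Defs.
From Stdlib Require Import Reals Lra.
From Coquelicot Require Import Coquelicot.
Open Scope R_scope.

Lemma cont_Rmin (f g : R -> R) x : continuous f x -> continuous g x -> continuous (fun y => Rmin (f y) (g y)) x.
Proof.
intros Hf Hg.
apply continuous_ext with (fun y => mult (/2) (plus (plus (f y) (g y)) (opp (Rabs (plus (f y) (opp (g y))))))).
- intros y. unfold mult, plus, opp; simpl. unfold Rmin; destruct (Rle_dec (f y) (g y)); unfold Rabs; destruct (Rcase_abs _); lra.
- apply (continuous_mult (fun _ => /2)). apply continuous_const.
  apply (@continuous_plus R_UniformSpace R_AbsRing R_NormedModule).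
  apply (@continuous_plus R_UniformSpace R_AbsRing R_NormedModule); auto.
  apply (@continuous_opp R_UniformSpace R_AbsRing R_NormedModule).
  apply continuous_Rabs_comp.
  apply (@continuous_plus R_UniformSpace R_AbsRing R_NormedModule); auto.
  apply (@continuous_opp R_UniformSpace R_AbsRing R_NormedModule); auto.
Qed.

Lemma exd_cont (f:R->R) x : ex_derive f x -> continuous f x.
Proof. apply (@ex_derive_continuous R_AbsRing R_NormedModule). Qed.

Lemma exp_le x y : x <= y -> exp x <= exp y.
Proof. intros [H|H]. left; apply exp_increasing; auto. subst; lra. Qed.

Definition hh a b s := Psi a b s / psi a b s.
Definition II a b x := RInt (hh a b) 0 x.

Lemma psi_cont a b x : continuous (psi a b) x.
Proof.
unfold psi. apply continuous_exp_comp.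
apply (continuous_mult (fun _ => -a)). apply continuous_const.
apply cont_Rmin. apply exd_cont; auto_derive; auto. apply continuous_const.
Qed.

Lemma psi_pos a b x : 0 < psi a b x.
Proof. apply exp_pos. Qed.

Lemma psi_le1 a b x : 0 < a -> psi a b x <= 1.
Proof.
intros Ha. unfold psi. rewrite <- exp_0. apply exp_le.
assert (0 <= Rmin (x^2) (b^2)). apply Rmin_glb; apply pow2_ge_0.
nra.
Qed.

Lemma psi_ge a b x : 0 < a -> exp (- a * b^2) <= psi a b x.
Proof.
intros Ha. unfold psi. apply exp_le.
assert (Rmin (x^2) (b^2) <= b^2) by apply Rmin_r. nra.
Qed.

Lemma ex_psi a b u v : ex_RInt (psi a b) u v.
Proof. apply (@ex_RInt_continuous R_CompleteNormedModule); intros; apply psi_cont. Qed.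

Lemma Psi_deriv a b x : is_derive (Psi a b) x (psi a b x).
Proof.
apply (is_derive_RInt (psi a b) (Psi a b) 0).
apply filter_forall; intros; apply (@RInt_correct R_CompleteNormedModule); apply ex_psi.
apply psi_cont.
Qed.

Lemma Psi_cont a b x : continuous (Psi a b) x.
Proof. apply exd_cont. eexists; apply Psi_deriv. Qed.

Lemma hh_cont a b x : continuous (hh a b) x.
Proof.
unfold hh. apply (continuous_mult (Psi a b) (fun s => / psi a b s)).
apply Psi_cont. apply continuous_Rinv_comp. apply psi_cont. apply Rgt_not_eq, psi_pos.
Qed.

Lemma ex_hh a b u v : ex_RInt (hh a b) u v.
Proof. apply (@ex_RInt_continuous R_CompleteNormedModule); intros; apply hh_cont. Qed.

Lemma II_deriv a b x : is_derive (II a b) x (hh a b x).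
Proof.
apply (is_derive_RInt (hh a b) (II a b) 0).
apply filter_forall; intros; apply (@RInt_correct R_CompleteNormedModule); apply ex_hh.
apply hh_cont.
Qed.

Lemma II_cont a b x : continuous (II a b) x.
Proof. apply exd_cont. eexists; apply II_deriv. Qed.

Lemma gfun_eq a b r : gfun a b r = 1 - / 2 * (II a b (Rmin r b) / II a b b).
Proof. reflexivity. Qed.

Lemma g_cont a b x : continuous (gfun a b) x.
Proof.
apply continuous_ext with (fun r => 1 - / 2 * (II a b (Rmin r b) / II a b b)).
intros; reflexivity.
apply (continuous_comp (fun r => Rmin r b) (fun m => 1 - / 2 * (II a b m / II a b b))).
apply cont_Rmin. apply continuous_id. apply continuous_const.
apply continuous_ext with (fun m => plus 1 (mult (- / 2 * / II a b b) (II a b m))).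
intros; unfold plus, mult; simpl; unfold Rdiv; ring.
apply (@continuous_plus R_UniformSpace R_AbsRing R_NormedModule).
apply continuous_const.
apply (continuous_mult (fun _ => - / 2 * / II a b b)). apply continuous_const.
apply II_cont.
Qed.

Lemma pg_cont a b x : continuous (fun s => psi a b s * gfun a b s) x.
Proof. apply (continuous_mult (psi a b) (gfun a b)). apply psi_cont. apply g_cont. Qed.

Lemma ex_pg a b u v : ex_RInt (fun s => psi a b s * gfun a b s) u v.
Proof. apply (@ex_RInt_continuous R_CompleteNormedModule); intros; apply pg_cont. Qed.

Lemma f_deriv a b x : is_derive (ffun a b) x (psi a b x * gfun a b x).
Proof.
apply (is_derive_RInt (fun s => psi a b s * gfun a b s) (ffun a b) 0).
apply filter_forall; intros; apply (@RInt_correct R_CompleteNormedModule); apply ex_pg.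
apply pg_cont.
Qed.

Lemma RInt_cst (c : R) u v : @eq R (RInt (fun _ => c) u v) ((v - u) * c).
Proof. exact (@RInt_const R_CompleteNormedModule u v c). Qed.

Lemma ex_cst (c : R) u v : ex_RInt (fun _ => c) u v.
Proof. apply (@ex_RInt_const R_CompleteNormedModule). Qed.

Lemma int_lin c v : RInt (fun s => c * s) 0 v = c * v^2 / 2.
Proof.
assert (H : is_RInt (fun s => c * s) 0 v (minus ((fun s => c * s^2/2) v) ((fun s => c * s^2/2) 0))).
{ apply (@is_RInt_derive R_CompleteNormedModule (fun s => c * s^2/2)).
  intros; auto_derive; [auto | field].
  intros; apply exd_cont; auto_derive; auto. }
rewrite (is_RInt_unique _ _ _ _ H). unfold minus, plus, opp; simpl. field.
Qed.

Lemma ex_lin c u v : ex_RInt (fun s => c * s) u v.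
Proof. apply (@ex_RInt_continuous R_CompleteNormedModule); intros; apply exd_cont; auto_derive; auto. Qed.

Lemma Psi_ge a b r : 0 < a -> 0 <= r -> exp (- a * b^2) * r <= Psi a b r.
Proof.
intros Ha Hr. unfold Psi.
apply Rle_trans with (RInt (fun _ => exp (- a * b^2)) 0 r).
right; rewrite RInt_cst; ring.
apply RInt_le; auto. apply ex_cst. apply ex_psi.
intros; apply psi_ge; auto.
Qed.

Lemma Psi_le a b r : 0 < a -> 0 <= r -> Psi a b r <= r.
Proof.
intros Ha Hr. unfold Psi.
apply Rle_trans with (RInt (fun _ => 1) 0 r).
2: right; rewrite RInt_cst; ring.
apply RInt_le; auto. apply ex_psi. apply ex_cst.
intros; apply psi_le1; auto.
Qed.

Lemma e_pos a b : 0 < exp (- a * b^2).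
Proof. apply exp_pos. Qed.

Lemma Psi_nonneg a b r : 0 < a -> 0 <= r -> 0 <= Psi a b r.
Proof.
intros Ha Hr. pose proof (Psi_ge a b r Ha Hr). pose proof (e_pos a b). nra.
Qed.

Lemma hh_ge a b s : 0 < a -> 0 <= s -> exp (- a * b^2) * s <= hh a b s.
Proof.
intros Ha Hs. unfold hh, Rdiv.
pose proof (Psi_ge a b s Ha Hs). pose proof (Psi_nonneg a b s Ha Hs).
pose proof (psi_pos a b s). pose proof (psi_le1 a b s Ha).
assert (1 <= / psi a b s). { rewrite <- Rinv_1. apply Rinv_le_contravar; auto. }
nra.
Qed.

Lemma hh_le a b s : 0 < a -> 0 <= s -> hh a b s <= / exp (- a * b^2) * s.
Proof.
intros Ha Hs. unfold hh, Rdiv.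
pose proof (Psi_le a b s Ha Hs). pose proof (Psi_nonneg a b s Ha Hs).
pose proof (psi_pos a b s). pose proof (psi_ge a b s Ha). pose proof (e_pos a b).
assert (/ psi a b s <= / exp (- a * b^2)). { apply Rinv_le_contravar; auto. }
assert (0 <= / psi a b s). { left; apply Rinv_0_lt_compat; auto. }
nra.
Qed.

Lemma hh_nonneg a b s : 0 < a -> 0 <= s -> 0 <= hh a b s.
Proof. intros. pose proof (hh_ge a b s H H0). pose proof (e_pos a b). nra. Qed.

Lemma II_pos a b : 0 < a -> 0 < b -> exp (- a * b^2) * b^2 / 2 <= II a b b.
Proof.
intros Ha Hb. unfold II. rewrite <- int_lin.
apply RInt_le. lra. apply ex_lin. apply ex_hh. intros; apply hh_ge; lra.
Qed.

Lemma II_le a b : 0 < a -> 0 < b -> II a b b <= / exp (- a * b^2) * b^2 / 2.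
Proof.
intros Ha Hb. unfold II. rewrite <- int_lin.
apply RInt_le. lra. apply ex_hh. apply ex_lin. intros; apply hh_le; lra.
Qed.

Lemma II_nonneg a b t : 0 < a -> 0 <= t -> 0 <= II a b t.
Proof.
intros Ha Ht. unfold II. apply RInt_ge_0; auto. apply ex_hh. intros; apply hh_nonneg; lra.
Qed.

Lemma II_mono a b t u : 0 < a -> 0 <= t <= u -> II a b t <= II a b u.
Proof.
intros Ha Ht. unfold II.
rewrite <- (@RInt_Chasles R_CompleteNormedModule (hh a b) 0 t u) by apply ex_hh.
assert (0 <= RInt (hh a b) t u). { apply RInt_ge_0. lra. apply ex_hh. intros; apply hh_nonneg; lra. }
change (RInt (hh a b) 0 t <= RInt (hh a b) 0 t + RInt (hh a b) t u). lra.
Qed.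

Lemma g_bounds a b r : 0 < a -> 0 < b -> 0 <= r -> / 2 <= gfun a b r <= 1.
Proof.
intros Ha Hb Hr. rewrite gfun_eq.
assert (Hm : 0 <= Rmin r b <= b). { split. apply Rmin_glb; lra. apply Rmin_r. }
pose proof (II_pos a b Ha Hb). pose proof (e_pos a b).
assert (HI : 0 < II a b b). { assert (0 < b^2) by nra. assert (0 < exp (- a * b^2) * b^2) by nra. lra. }
pose proof (II_nonneg a b _ Ha (proj1 Hm)). pose proof (II_mono a b _ _ Ha Hm).
assert (0 <= II a b (Rmin r b) / II a b b <= 1).
{ split. unfold Rdiv; apply Rmult_le_pos; auto. left; apply Rinv_0_lt_compat; auto.
  apply Rmult_le_reg_r with (II a b b); auto. unfold Rdiv. rewrite Rmult_assoc, Rinv_l; lra. }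
lra.
Qed.

Lemma f_bounds a b r : 0 < a -> 0 < b -> 0 <= r -> / 2 * Psi a b r <= ffun a b r <= Psi a b r.
Proof.
intros Ha Hb Hr. unfold ffun.
assert (E : RInt (fun s => / 2 * psi a b s) 0 r = / 2 * Psi a b r).
{ exact (@RInt_scal R_CompleteNormedModule (psi a b) 0 r (/2) (ex_psi a b 0 r)). }
split.
- rewrite <- E. apply RInt_le; auto. exact (ex_RInt_scal (V:=R_CompleteNormedModule) (psi a b) 0 r (/2) (ex_psi a b 0 r)).
  apply ex_pg. intros x Hx. pose proof (g_bounds a b x Ha Hb ltac:(lra)). pose proof (psi_pos a b x). nra.
- unfold Psi. apply RInt_le; auto. apply ex_pg. apply ex_psi.
  intros x Hx. pose proof (g_bounds a b x Ha Hb ltac:(lra)). pose proof (psi_pos a b x). nra.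
Qed.

Lemma deriv_in D F x l : is_derive F x l -> has_deriv_in D F x l.
Proof.
intros H. apply is_derive_Reals in H.
unfold has_deriv_in. intros P [eps HP]. unfold within, locally.
destruct (H eps (cond_pos eps)) as [d Hd].
exists d. intros y0 Hy [_ Hne]. apply HP. set (y := (y0 : R)) in *.
change (Rabs ((F y - F x)/(y-x) - l) < eps).
change (Rabs (y - x) < d) in Hy.
specialize (Hd (y - x)). assert (E : x + (y - x) = y) by ring. rewrite E in Hd. apply Hd; auto. lra.
Qed.

Lemma proper_within (D : R -> Prop) x : (forall d, 0 < d -> exists y, D y /\ y <> x /\ Rabs (y - x) < d) ->
  ProperFilter' (within (fun y => D y /\ y <> x) (locally x)).
Proof.
intros H. constructor.
- intros [d Hd]. destruct (H d (cond_pos d)) as [y [Hy1 [Hy2 Hy3]]]. apply (Hd y); auto.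
- apply within_filter, locally_filter.
Qed.

Lemma deriv_in_unique (D : R -> Prop) F x l1 l2 :
  (forall d, 0 < d -> exists y, D y /\ y <> x /\ Rabs (y - x) < d) ->
  has_deriv_in D F x l1 -> has_deriv_in D F x l2 -> l1 = l2.
Proof.
intros HP H1 H2.
apply (@filterlim_locally_unique _ R_AbsRing R_NormedModule _ (proper_within D x HP) _ l1 l2 H1 H2).
Qed.

Lemma deriv_in_ext (D : R -> Prop) F G x l : locally x (fun y => D y -> F y = G y) -> F x = G x ->
  has_deriv_in D G x l -> has_deriv_in D F x l.
Proof.
intros Hl Hx H. unfold has_deriv_in in *. eapply filterlim_ext_loc; [| exact H].
unfold within. apply (filter_imp _ _ (F := locally x)) with (2:=Hl). intros y Hy [HD _].
rewrite Hx, (Hy HD). reflexivity.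
Qed.

Lemma near_nonneg x : 0 <= x -> forall d, 0 < d -> exists y, nonneg_dom y /\ y <> x /\ Rabs (y - x) < d.
Proof.
intros Hx d Hd. exists (x + d/2). unfold nonneg_dom. split. lra. split. lra.
rewrite Rabs_right; lra.
Qed.

Lemma near_interval b x : 0 < b -> 0 <= x <= b -> forall d, 0 < d -> exists y, (0 <= y <= b) /\ y <> x /\ Rabs (y - x) < d.
Proof.
intros Hb Hx d Hd. destruct (Rlt_or_le x b) as [Hl|Hl].
- exists (x + Rmin d (b - x) / 2).
  assert (0 < Rmin d (b - x)) by (apply Rmin_glb_lt; lra).
  pose proof (Rmin_l d (b-x)). pose proof (Rmin_r d (b-x)).
  split. lra. split. lra. rewrite Rabs_right; lra.
- exists (x - Rmin d b / 2).
  assert (0 < Rmin d b) by (apply Rmin_glb_lt; lra).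
  pose proof (Rmin_l d b). pose proof (Rmin_r d b).
  split. lra. split. lra. rewrite Rabs_left; lra.
Qed.

Definition phi a b y := exp (- a * y^2) * (1 - / 2 * (II a b y / II a b b)).
Definition dphi a b y := - (2 * a * y) * exp (- a * y^2) * (1 - / 2 * (II a b y / II a b b))
   + exp (- a * y^2) * (- / 2 * (hh a b y / II a b b)).

Lemma alg (a y E I1 Ib H : R) : - a * (1 * ((1 + 1) * (y * 1))) * E * (1 + - (/ 2 * (I1 * / Ib))) + E * - (/ 2 * (1 * H * / Ib)) = - (2 * a * y) * E * (1 - / 2 * (I1 / Ib)) + E * (- / 2 * (H / Ib)).
Proof. unfold Rdiv. ring. Qed.

Lemma phi_deriv a b y : is_derive (phi a b) y (dphi a b y).
Proof.
unfold phi, dphi. auto_derive.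
- eexists; apply II_deriv.
- replace (Derive (fun x => II a b x) y) with (hh a b y) by (symmetry; apply is_derive_unique, II_deriv). apply alg.
Qed.

Lemma psi_in a b r : 0 <= r <= b -> psi a b r = exp (- a * r^2).
Proof. intros H. unfold psi. rewrite Rmin_left. reflexivity. nra. Qed.

Lemma g_in a b r : 0 <= r <= b -> gfun a b r = 1 - / 2 * (II a b r / II a b b).
Proof. intros H. rewrite gfun_eq, Rmin_left by lra. reflexivity. Qed.

Lemma fp_phi a b y : 0 <= y <= b -> psi a b y * gfun a b y = phi a b y.
Proof. intros H. rewrite psi_in, g_in by lra. reflexivity. Qed.

Lemma II_gt a b : 0 < a -> 0 < b -> 0 < II a b b.
Proof.
intros Ha Hb. pose proof (II_pos a b Ha Hb). pose proof (e_pos a b).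
assert (0 < b^2) by nra. assert (0 < exp (- a * b^2) * b^2) by nra. lra.
Qed.

Lemma fp_const a b y : 0 < a -> 0 < b -> b < y -> psi a b y * gfun a b y = exp (- a * b^2) * / 2.
Proof.
intros Ha Hb Hy. pose proof (II_gt a b Ha Hb).
unfold psi. rewrite gfun_eq. rewrite (Rmin_right y b) by lra. rewrite (Rmin_right (y^2) (b^2)) by nra.
field. lra.
Qed.

Lemma dphi_eq a b r : 0 < a -> 0 < b -> 0 <= r <= b ->
  dphi a b r = - (2 * a * r) * (psi a b r * gfun a b r) - / 2 * (Psi a b r / II a b b).
Proof.
intros Ha Hb Hr. pose proof (II_gt a b Ha Hb). pose proof (psi_pos a b r).
unfold dphi. rewrite <- (psi_in a b r Hr), <- (g_in a b r Hr). unfold hh.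
field. split; lra.
Qed.

Theorem lemma2 (alpha Rf : R) (Halpha : 0 < alpha) (HRf : 0 < Rf) :
  let f := ffun alpha Rf in
  let ps := psi alpha Rf in
  let Ps := Psi alpha Rf in
  let e := exp (- alpha * Rf ^ 2) in
  (* f is differentiable on [0, +oo) (one-sided at 0) *)
  (forall r, 0 <= r -> exists l, has_deriv_in nonneg_dom f r l) /\
  (forall fp : R -> R,
     (forall r, 0 <= r -> has_deriv_in nonneg_dom f r (fp r)) ->
     (* (F1) *)
     (f 0 = 0 /\ fp 0 = 1) /\
     (* (F2) *)
     (forall r, 0 <= r -> / 2 * e <= / 2 * ps r /\ / 2 * ps r <= fp r /\ fp r <= 1) /\
     (* (F3) *)
     (forall r, 0 <= r ->
        / 2 * e * r <= / 2 * Ps r /\ / 2 * Ps r <= f r /\ f r <= Ps r /\ Ps r <= r) /\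
     (* f' is differentiable on [0, Rf] (one-sided at the endpoints) and on (Rf, +oo) *)
     (forall r, 0 <= r <= Rf -> exists l, has_deriv_in (fun y => 0 <= y <= Rf) fp r l) /\
     (forall r, Rf < r -> exists l, has_deriv_in nonneg_dom fp r l) /\
     (forall fpp : R -> R,
        (forall r, 0 <= r <= Rf -> has_deriv_in (fun y => 0 <= y <= Rf) fp r (fpp r)) ->
        (forall r, Rf < r -> has_deriv_in nonneg_dom fp r (fpp r)) ->
        (* (F4) *)
        (forall r, 0 <= r <= Rf -> fpp r + alpha * r * fp r <= - (e / Rf ^ 2) * f r) /\
        (* (F5) *)
        (forall r, 0 <= r -> fpp r <= 0) /\
        (forall r, Rf < r -> fpp r = 0)) /\
     (* (F6) *)
     (ln 2 <= alpha * Rf ^ 2 ->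
        forall c r, 0 < c < 1 -> 0 <= r ->
          f r <= exp (- (c * e / 4)) * f ((1 + c) * r))).
Proof.
cbv zeta.
split.
{ intros r Hr. exists (psi alpha Rf r * gfun alpha Rf r). apply deriv_in, f_deriv. }
intros fp Hfp.
assert (Hfpe : forall r, 0 <= r -> fp r = psi alpha Rf r * gfun alpha Rf r).
{ intros r Hr. apply (deriv_in_unique nonneg_dom (ffun alpha Rf) r). apply near_nonneg; auto.
  apply Hfp; auto. apply deriv_in, f_deriv. }
pose proof (e_pos alpha Rf) as He.
assert (He1 : exp (- alpha * Rf^2) <= 1). { rewrite <- exp_0. apply exp_le. nra. }
pose proof (II_gt alpha Rf Halpha HRf) as HI.
assert (Hd1 : forall r, 0 <= r <= Rf -> has_deriv_in (fun y => 0 <= y <= Rf) fp r (dphi alpha Rf r)).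
{ intros r Hr. apply deriv_in_ext with (phi alpha Rf).
  - apply filter_forall. intros y Hy. rewrite Hfpe by lra. apply fp_phi; lra.
  - rewrite Hfpe by lra. apply fp_phi; lra.
  - apply deriv_in, phi_deriv. }
assert (Hd2 : forall r, Rf < r -> has_deriv_in nonneg_dom fp r 0).
{ intros r Hr. apply deriv_in_ext with (fun _ => exp (- alpha * Rf^2) * / 2).
  - assert (Hd: 0 < r - Rf) by lra. exists (mkposreal _ Hd). intros y Hy Hy0.
    change (Rabs (y - r) < r - Rf) in Hy. unfold nonneg_dom in Hy0.
    assert (Rf < y). { destruct (Rabs_def2 _ _ Hy). lra. }
    rewrite Hfpe by lra. apply fp_const; lra.
  - rewrite Hfpe by lra. apply fp_const; lra.
  - apply deriv_in. apply (@is_derive_const R_AbsRing R_NormedModule). }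
split.
{ split.
  - unfold ffun. exact (@RInt_point R_CompleteNormedModule 0 _).
  - rewrite Hfpe by lra. rewrite gfun_eq. unfold psi. rewrite Rmin_left by nra. rewrite Rmin_left by lra.
    unfold II. rewrite (@RInt_point R_CompleteNormedModule 0 _).
    replace (- alpha * 0 ^ 2) with 0 by ring. rewrite exp_0. change (zero : R) with 0. unfold Rdiv. ring. }
split.
{ intros r Hr. rewrite Hfpe by lra.
  pose proof (psi_ge alpha Rf r Halpha). pose proof (psi_le1 alpha Rf r Halpha).
  pose proof (psi_pos alpha Rf r). pose proof (g_bounds alpha Rf r Halpha HRf Hr). nra. }
split.
{ intros r Hr. pose proof (Psi_ge alpha Rf r Halpha Hr). pose proof (Psi_le alpha Rf r Halpha Hr).
  pose proof (f_bounds alpha Rf r Halpha HRf Hr). lra. }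
split.
{ intros r Hr. exists (dphi alpha Rf r). auto. }
split.
{ intros r Hr. exists 0. auto. }
split.
{ intros fpp H1 H2.
  assert (Hfpp1 : forall r, 0 <= r <= Rf -> fpp r = - (2 * alpha * r) * fp r - / 2 * (Psi alpha Rf r / II alpha Rf Rf)).
  { intros r Hr. rewrite Hfpe by lra. rewrite <- dphi_eq by auto.
    apply (deriv_in_unique (fun y => 0 <= y <= Rf) fp r). apply near_interval; auto. auto. auto. }
  assert (Hfpp2 : forall r, Rf < r -> fpp r = 0).
  { intros r Hr. apply (deriv_in_unique nonneg_dom fp r). apply near_nonneg; lra. auto. auto. }
  assert (Hq : forall r, 0 <= r -> 0 <= Psi alpha Rf r / II alpha Rf Rf).
  { intros r Hr. unfold Rdiv. apply Rmult_le_pos. apply Psi_nonneg; auto. left; apply Rinv_0_lt_compat; auto. }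
  assert (Hfp0 : forall r, 0 <= r -> 0 < fp r).
  { intros r Hr. rewrite Hfpe by auto. pose proof (psi_pos alpha Rf r). pose proof (g_bounds alpha Rf r Halpha HRf Hr). nra. }
  split.
  - intros r Hr. rewrite Hfpp1 by auto.
    pose proof (Hfp0 r (proj1 Hr)).
    pose proof (f_bounds alpha Rf r Halpha HRf (proj1 Hr)).
    pose proof (Psi_nonneg alpha Rf r Halpha (proj1 Hr)).
    pose proof (II_le alpha Rf Halpha HRf).
    assert (H2eI : 2 * exp (- alpha * Rf^2) * II alpha Rf Rf <= Rf^2).
    { assert (HH : exp (- alpha * Rf^2) * II alpha Rf Rf <= exp (- alpha * Rf^2) * (/ exp (- alpha * Rf^2) * Rf^2 / 2)).
      { apply Rmult_le_compat_l; lra. }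
      replace (exp (- alpha * Rf^2) * (/ exp (- alpha * Rf^2) * Rf^2 / 2)) with (Rf^2/2) in HH by (field; lra).
      lra. }
    assert (HK : exp (- alpha * Rf^2) / Rf^2 <= / 2 * / II alpha Rf Rf).
    { assert (E : / 2 * / II alpha Rf Rf - exp (- alpha * Rf^2) / Rf^2 = (Rf^2 - 2 * exp (- alpha * Rf^2) * II alpha Rf Rf) / (2 * II alpha Rf Rf * Rf^2)) by (field; split; lra).
      assert (0 <= (Rf^2 - 2 * exp (- alpha * Rf^2) * II alpha Rf Rf) / (2 * II alpha Rf Rf * Rf^2)).
      { unfold Rdiv. apply Rmult_le_pos. lra. left; apply Rinv_0_lt_compat. assert (0 < Rf^2) by nra. nra. }
      lra. }
    assert (HK0 : 0 <= exp (- alpha * Rf^2) / Rf^2).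
    { unfold Rdiv. apply Rmult_le_pos. lra. left; apply Rinv_0_lt_compat. nra. }
    assert (T1 : 0 <= alpha * r * fp r). { apply Rmult_le_pos. nra. lra. }
    assert (T2 : exp (- alpha * Rf^2) / Rf^2 * ffun alpha Rf r <= / 2 * / II alpha Rf Rf * Psi alpha Rf r).
    { apply Rle_trans with (exp (- alpha * Rf^2) / Rf^2 * Psi alpha Rf r).
      apply Rmult_le_compat_l; lra. apply Rmult_le_compat_r; lra. }
    unfold Rdiv in *. nra.
  - split.
    + intros r Hr. destruct (Rle_or_lt r Rf) as [Hl|Hl].
      * rewrite Hfpp1 by lra. pose proof (Hfp0 r Hr). pose proof (Hq r Hr).
        assert (0 <= alpha * r * fp r). { apply Rmult_le_pos. nra. lra. }
        nra.
      * rewrite Hfpp2 by lra. lra.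
    + auto. }
intros _ c r Hc Hr.
set (e := exp (- alpha * Rf^2)) in *.
set (r' := (1 + c) * r).
assert (Hr' : r <= r') by (unfold r'; nra).
assert (Ech : ffun alpha Rf r' = ffun alpha Rf r + RInt (fun s => psi alpha Rf s * gfun alpha Rf s) r r').
{ unfold ffun. symmetry. exact (@RInt_Chasles R_CompleteNormedModule _ 0 r r' (ex_pg _ _ _ _) (ex_pg _ _ _ _)). }
assert (HQ : (r' - r) * (e / 2) <= RInt (fun s => psi alpha Rf s * gfun alpha Rf s) r r').
{ apply Rle_trans with (RInt (fun _ => e / 2) r r').
  right; rewrite RInt_cst; ring.
  apply RInt_le; auto. apply ex_cst. apply ex_pg.
  intros x Hx. pose proof (psi_ge alpha Rf x Halpha). pose proof (psi_pos alpha Rf x).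
  pose proof (g_bounds alpha Rf x Halpha HRf ltac:(lra)). fold e in H. nra. }
rewrite Ech.
set (Q := RInt (fun s => psi alpha Rf s * gfun alpha Rf s) r r') in *.
set (x := c * e / 4).
pose proof (f_bounds alpha Rf r Halpha HRf Hr). pose proof (Psi_le alpha Rf r Halpha Hr).
pose proof (Psi_nonneg alpha Rf r Halpha Hr).
set (F := ffun alpha Rf r) in *.
assert (Hx : 0 <= x <= / 4). { unfold x. split. nra. nra. }
assert (HQ2 : 2 * x * r <= Q). { unfold x. unfold r' in HQ. nra. }
pose proof (exp_ineq1_le (- x)).
assert (0 <= x * r) by (apply Rmult_le_pos; lra).
assert (A1 : (1 - x) * (F + Q) <= exp (- x) * (F + Q)). { apply Rmult_le_compat_r; lra. }
assert (A2 : (1 - x) * (F + 2 * x * r) <= (1 - x) * (F + Q)). { apply Rmult_le_compat_l; lra. }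
assert (A3 : 0 <= x * (r - F)). { apply Rmult_le_pos; lra. }
assert (A4 : 0 <= x * r * (1 - 2 * x)). { apply Rmult_le_pos. apply Rmult_le_pos; lra. lra. }
replace (- (c * e / 4)) with (- x) by reflexivity.
nra.
Qed.
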